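(* Let $n\ge 1$ and let $G$ be a finite group of permutations of $[2n]=\{1,\dots,2n\}$ acting on the circuit $\Delta_{2n}$ (i.e. $G$ is a group of automorphisms of the cycle graph $\Delta_{2n}=(1\,2\,\dots\,2n)$). Then the number of equivalence classes of $n$-diagrams under the action of $G$ equals \[ \frac{1}{|S_n \wr S_2| \cdot |G|} \sum_{\pi \in S_n \wr S_2} \sum_{\eta \in G} \; \prod_i i^{\pi_i} \: \eta_i \: (\eta_i - 1) \: \cdots \: (\eta_i - \pi_i + 1), \] where $\pi$ has cycle type $1^{\pi_1}2^{\pi_2}\cdots(2n)^{\pi_{2n}}$ as a permutation of $[n]\times[2]$, $\eta$ has cycle type $1^{\eta_1}2^{\eta_2}\cdots(2n)^{\eta_{2n}}$ as a permutation of $[2n]$, the product is taken over all $i\in[2n]$ with $\pi_i>0$, and the product is understood to be $0$ if $\pi_i>\eta_i$ for some $i$.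
   Context: A chord diagram of order $n$ (an $n$-diagram) is a 3-regular graph on vertex set $[2n]$ containing the $2n$-circuit $\Delta_{2n}=(1\,2\,\dots\,2n)$ as a subgraph; the edges of $\Delta_{2n}$ form the circle, the remaining edges are the chords (so the chords form a perfect matching of $[2n]$). Given a group $G$ acting on $\Delta_{2n}$, two $n$-diagrams $\Gamma_1,\Gamma_2$ are equivalent if there is $g\in G$ taking the chords of $\Gamma_1$ to the chords of $\Gamma_2$. The wreath product $S_n\wr S_2$ consists of pairs $(\tau,\bar\sigma)$ with $\tau\in S_n$, $\bar\sigma=(\sigma_1,\dots,\sigma_n)\in S_2^n$, acting on $[n]\times[2]$ by $(\tau,\bar\sigma)\cdot(i,j)=(\tau(i),\sigma_i(j))$; it has order $2^n n!$. *)

(* Defs.v *)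
From mathcomp Require Import all_boot all_order all_algebra all_fingroup.
Set Implicit Arguments. Unset Strict Implicit. Unset Printing Implicit Defensive.

(* Points of the circle are 'I_(2n) (0-based: point k+1 of the paper is k). *)

Definition circ_adj (m : nat) (x y : 'I_m) : bool :=
  (val y == (val x).+1 %% m) || (val x == (val y).+1 %% m).

Definition circ_aut (m : nat) (g : {perm 'I_m}) : bool :=
  [forall x, forall y, circ_adj (g x) (g y) == circ_adj x y].

(* A chord set (perfect matching of the 2n points): the chords of an n-diagram. *)
Definition is_chordset (m : nat) (M : {set {set 'I_m}}) : bool :=
  partition M [set: 'I_m] && [forall B in M, #|B| == 2].

Definition chordsets (m : nat) : {set {set {set 'I_m}}} :=
  [set M | is_chordset M].

Definition act_chords (m : nat) (g : {perm 'I_m}) (M : {set {set 'I_m}}) :=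
  [set (fun x => g x) @: B | B : {set 'I_m} in M].

Definition chord_class (m : nat) (G : {set {perm 'I_m}}) (M : {set {set 'I_m}}) :=
  [set M' in chordsets m | [exists g in G, act_chords g M == M']].

Definition num_classes (m : nat) (G : {set {perm 'I_m}}) : nat :=
  #|[set chord_class G M | M in chordsets m]|.

Definition wreath (n : nat) : {set {perm ('I_n * 'I_2)}} :=
  [set p : {perm ('I_n * 'I_2)} | [exists tau : {perm 'I_n}, exists s : {ffun 'I_n -> {perm 'I_2}},
             [forall x, p x == (tau x.1, s x.1 x.2)]]].

Definition cyc (T : finType) (s : {perm T}) (i : nat) : nat :=
  #|[set C in porbits s | #|C| == i]|.

(* Main.v *)
Require Import Defs.
From mathcomp Require Import all_boot all_order all_algebra all_fingroup.
From mathcomp Require Import ring.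
Set Implicit Arguments. Unset Strict Implicit. Unset Printing Implicit Defensive.


Section Orb.
Variables (T : finType) (p : {perm T}).

Definition invs (S : {set T}) := [forall z in S, p z \in S].

Lemma invs_iter S z a : invs S -> z \in S -> iter a p z \in S.
Proof. by move=> /forall_inP hS zS; elim: a => //= a IH; apply: hS. Qed.

Lemma porbit_sub S z : invs S -> z \in S -> porbit p z \subset S.
Proof. by move=> hS zS; apply/subsetP=> w /porbitP[i ->]; rewrite permX invs_iter. Qed.

Lemma porbit_disj (s : {perm T}) a b : porbit s a != porbit s b ->
  [disjoint porbit s a & porbit s b].
Proof.
move=> ne; apply/pred0P=> w /=; apply/negP=> /andP[wa wb]; move: ne.
rewrite -eq_porbit_mem in wa; rewrite -eq_porbit_mem in wb.
by rewrite -(eqP wa) -(eqP wb) eqxx.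
Qed.

Definition cS (S : {set T}) i := #|[set D in porbits p | (D \subset S) && (#|D| == i)]|.

Lemma card_pts S k : invs S -> #|[set z in S | #|porbit p z| == k]| = (cS S k * k)%N.
Proof.
move=> hS; apply: card_uniform_partition.
  by move=> D; rewrite inE => /andP[_ /andP[_ /eqP]].
apply/and3P; split.
- rewrite eqEsubset; apply/andP; split; apply/subsetP=> z.
    case/bigcupP=> D; rewrite !inE => /andP[/imsetP[w _ ->] /andP[hsub /eqP kD]] zD.
    rewrite (subsetP hsub) //=.
    by move: zD; rewrite -eq_porbit_mem => /eqP ->; rewrite kD.
  rewrite inE => /andP[zS kz]; apply/bigcupP; exists (porbit p z); last exact: porbit_id.
  by rewrite inE imset_f //= kz porbit_sub.
- apply/trivIsetP=> A B; rewrite !inE => /andP[/imsetP[a _ ->] _] /andP[/imsetP[b _ ->] _].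
  exact: porbit_disj.
- apply/negP; rewrite inE => /andP[/imsetP[a _ /esym e] _].
  by move: (porbit_id p a); rewrite e inE.
Qed.

Lemma iter_lt_inj z i j : i < #|porbit p z| -> j < #|porbit p z| ->
  iter i p z = iter j p z -> i = j.
Proof.
move=> hi hj e; have u := uniq_traject_porbit p z.
apply/eqP; rewrite -(nth_uniq z _ _ u) ?size_traject //.
by rewrite !nth_traject // e.
Qed.

Lemma iter_mod z a : iter a p z = iter (a %% #|porbit p z|) p z.
Proof.
rewrite {1}(divn_eq a #|porbit p z|) addnC iterD; congr iter.
elim: (a %/ _) => [|b IH] //; by rewrite mulSn iterD IH iter_porbit.
Qed.

Lemma porbit_pos z : 0 < #|porbit p z|.
Proof. by rewrite lt0n card_porbit_neq0. Qed.

Lemma index_porbit z w (k := #|porbit p z|) : w \in porbit p z ->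
  index w (traject p z k) < k /\ iter (index w (traject p z k)) p z = w.
Proof.
move=> wz; have wt : w \in traject p z k by rewrite -porbit_traject.
split; first by rewrite -{2}(size_traject p z k) index_mem.
by rewrite -(nth_traject _ (_ : _ < k)) ?nth_index // -{2}(size_traject p z k) index_mem.
Qed.

End Orb.

Section Count.
Variables (T U : finType) (p : {perm T}) (q : {perm U}).

Definition Fs (S : {set T}) := [set f : {ffun T -> option U} |
  [&& [forall z, (z \in S) == (f z != None)],
      [forall z in S, forall w in S, (f z == f w) ==> (z == w)] &
      [forall z in S, f (p z) == omap q (f z)]]].

Lemma FsP (S : {set T}) (f : {ffun T -> option U}) : reflect
  [/\ forall z, (z \in S) = (f z != None),
      {in S &, forall z w, f z = f w -> z = w} &
      {in S, forall z, f (p z) = omap q (f z)}] (f \in Fs S).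
Proof.
rewrite inE; apply: (iffP and3P) => [[/forallP h1 /forall_inP h2 /forall_inP h3]|[h1 h2 h3]].
  split.
  - by move=> z; apply/eqP.
  - by move=> z w zS wS e; move/forall_inP: (h2 z zS) => /(_ w wS); rewrite e eqxx => /eqP.
  - by move=> z zS; apply/eqP; apply: h3.
split.
- by apply/forallP=> z; rewrite h1.
- apply/forall_inP=> z zS; apply/forall_inP=> w wS; apply/implyP=> /eqP e.
  by rewrite (h2 z w).
- by apply/forall_inP=> z zS; rewrite h3.
Qed.

Lemma Fs_iter (S : {set T}) f z a : invs p S -> f \in Fs S -> z \in S ->
  f (iter a p z) = omap (iter a q) (f z).
Proof.
move=> hS /FsP[_ _ h3] zS; elim: a => [|a IH] /=; first by case: (f z).
by rewrite h3 ?invs_iter // IH; case: (f z).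
Qed.

Lemma Fs_orbit (S : {set T}) f z y : invs p S -> f \in Fs S -> z \in S -> f z = Some y ->
  #|porbit q y| = #|porbit p z|.
Proof.
move=> hS hf zS fz; have [h1 h2 h3] := FsP _ _ hf.
pose g w := odflt y (f w).
have gE w : w \in S -> f w = Some (g w).
  by rewrite h1 /g; case: (f w).
have -> : porbit q y = g @: porbit p z.
  apply/setP=> y'; apply/porbitP/imsetP => [[i ->]|[w /porbitP[i ->] ->]].
    exists (iter i p z); first by rewrite -permX mem_porbit.
    by rewrite /g (Fs_iter _ hS hf zS) fz /= permX.
  by exists i; rewrite /g !permX (Fs_iter _ hS hf zS) fz.
apply: card_in_imset => w1 w2 w1S w2S e.
have s := subsetP (porbit_sub hS zS).
by apply: h2; rewrite ?s // !gE ?s // e.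
Qed.


Definition cq i := #|[set D in porbits q | #|D| == i]|.

Section Step.
Variables (S : {set T}) (x : T).
Hypotheses (hS : invs p S) (xS : x \in S).
Let C := porbit p x.
Let S' := S :\: C.
Let k := #|C|.

Lemma pC w : (p w \in C) = (w \in C).
Proof. by rewrite /C -!eq_porbit_mem; have := porbit_perm p 1 w; rewrite expg1 => ->. Qed.

Lemma CS : C \subset S.
Proof. exact: porbit_sub. Qed.

Lemma xC : x \in C.
Proof. exact: porbit_id. Qed.

Lemma invs_D : invs p S'.
Proof.
apply/forall_inP=> z; rewrite !inE => /andP[zC zS].
by rewrite pC zC (forall_inP hS).
Qed.

Lemma cS_D i : cS p S i = cS p S' i + (i == k).
Proof.
have e : [set D in porbits p | (D \subset S) && (#|D| == i)] =
  if i == k then C |: [set D in porbits p | (D \subset S') && (#|D| == i)]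
  else [set D in porbits p | (D \subset S') && (#|D| == i)].
  have key D : D \in porbits p -> (D \subset S) = (D \subset S') || (D == C).
    case/imsetP=> w _ ->; case: (eqVneq (porbit p w) C) => [->|ne]; first by rewrite CS orbT.
    by rewrite orbF subsetD porbit_disj // andbT.
  have nCS' : ~~ (C \subset S').
    by apply/negP=> /subsetP/(_ x xC); rewrite !inE xC.
  have Cp : C \in porbits p by rewrite imset_f.
  apply/setP=> D; case: ifP => ik; rewrite !inE; case Dp: (D \in porbits p) => //=;
    rewrite ?key //=.
  - case: (boolP (D == C)) => [/eqP->|nDC] /=; last by rewrite orbF.
    by rewrite (negbTE nCS') (eqP ik) eqxx.
  - by rewrite orbF; case: eqP => // DC; rewrite DC Cp in Dp.
  - case: (boolP (D == C)) => [/eqP->|nDC] /=; last by rewrite orbF.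
    by rewrite (negbTE nCS') eq_sym ik.
rewrite /cS e; case: eqP => [ik|]; last by rewrite addn0.
rewrite cardsU1 addnC; congr (_ + _); apply/eqP; rewrite eqb1 !inE.
have nCS' : ~~ (C \subset S') by apply/negP=> /subsetP/(_ x xC); rewrite !inE xC.
by rewrite (negbTE nCS') andbF.
Qed.

Definition restr (f : {ffun T -> option U}) : {ffun T -> option U} :=
  [ffun z => if z \in S' then f z else None].

Lemma S'S z : z \in S' -> z \in S.
Proof. by rewrite !inE => /andP[]. Qed.

Lemma restr_Fs f : f \in Fs S -> restr f \in Fs S'.
Proof.
case/FsP=> h1 h2 h3; apply/FsP; split.
- by move=> z; rewrite ffunE; case: ifP => // /S'S; rewrite h1.
- by move=> z w zS wS; rewrite !ffunE zS wS; apply: h2; apply: S'S.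
- move=> z zS; rewrite !ffunE zS.
  by rewrite (forall_inP invs_D) // h3 // S'S.
Qed.

Definition Y (f' : {ffun T -> option U}) :=
  [set y | (#|porbit q y| == k) && [forall z in S', f' z != Some y]].

Definition ext (f' : {ffun T -> option U}) (y : U) : {ffun T -> option U} :=
  [ffun z => if z \in S' then f' z else if z \in C then
     Some (iter (index z (traject p x k)) q y) else None].

Section Ext.
Variables (f' : {ffun T -> option U}) (y : U).
Hypotheses (hf' : f' \in Fs S') (hy : y \in Y f').

Lemma yk : #|porbit q y| = k.
Proof. by move: hy; rewrite inE => /andP[/eqP]. Qed.

Lemma ynot z : z \in S' -> f' z != Some y.
Proof. by move: hy; rewrite inE => /andP[_ /forall_inP]; apply. Qed.

Lemma notS'C z : z \in C -> z \notin S'.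
Proof. by rewrite !inE => ->. Qed.

Lemma ext_key a : ext f' y (iter a p x) = Some (iter a q y).
Proof.
have zC : iter a p x \in C by rewrite /C -permX mem_porbit.
rewrite ffunE (negbTE (notS'C zC)) zC.
have [lt e] := index_porbit zC.
congr Some; rewrite (iter_mod q y a) yk.
congr iter; apply: (iter_lt_inj (p := p) (z := x)) => //.
  by rewrite ltn_pmod // porbit_pos.
by rewrite e -iter_mod.
Qed.

Lemma ext_Fs : ext f' y \in Fs S.
Proof.
have [h1 h2 h3] := FsP _ _ hf'.
have eC z : z \in C -> exists2 a, a < k & z = iter a p x.
  by move=> zC; have [lt e] := index_porbit zC; exists (index z (traject p x k)).
have eS' z : z \in S' -> ext f' y z = f' z by move=> zS; rewrite ffunE zS.
have cross z w : z \in S' -> w \in C -> ext f' y z != ext f' y w.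
  move=> zS /eC[b lt ->]; rewrite ext_key eS' //; apply/eqP=> e.
  have := Fs_iter (k - b) invs_D hf' zS; rewrite e /= -iterD subnK 1?ltnW //.
  have -> : iter k q y = y by rewrite -yk iter_porbit.
  move=> e2; move: (ynot (invs_iter (k - b) invs_D zS)).
  by rewrite e2 eqxx.
apply/FsP; split.
- move=> z; rewrite ffunE; case: ifP => [zS|nS]; first by rewrite -h1 S'S.
  case: ifP => [zC|nC]; first by rewrite (subsetP CS).
  by move: nS; rewrite !inE nC /= => ->.
- move=> z w zS wS.
  case: (boolP (z \in S')) => zS'; case: (boolP (w \in S')) => wS'.
  + by rewrite !eS' //; apply: h2.
  + have wC : w \in C by move: wS'; rewrite !inE wS andbT negbK.
    by move=> e; move: (cross z w zS' wC); rewrite e eqxx.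
  + have zC : z \in C by move: zS'; rewrite !inE zS andbT negbK.
    by move=> e; move: (cross w z wS' zC); rewrite e eqxx.
  + have wC : w \in C by move: wS'; rewrite !inE wS andbT negbK.
    have zC : z \in C by move: zS'; rewrite !inE zS andbT negbK.
    case/eC: zC => a lta ->; case/eC: wC => b ltb ->.
    rewrite !ext_key => -[e]; congr iter.
    by apply: (iter_lt_inj (p := q) (z := y)); rewrite ?yk.
- move=> z zS; case: (boolP (z \in S')) => zS'.
    by rewrite !eS' ?h3 // (forall_inP invs_D).
  have zC : z \in C by move: zS'; rewrite !inE zS andbT negbK.
  by case/eC: zC => a _ ->; rewrite -iterS !ext_key.
Qed.

Lemma restr_ext : restr (ext f' y) = f'.
Proof.
have [h1 _ _] := FsP _ _ hf'.
apply/ffunP=> z; rewrite !ffunE; case: (boolP (z \in S')) => //= nS.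
by move: (h1 z); rewrite (negbTE nS); case: (f' z).
Qed.
End Ext.

Lemma fiber_card f' : f' \in Fs S' -> #|[set f in Fs S | restr f == f']| = #|Y f'|.
Proof.
move=> hf'.
have -> : #|Y f'| = #|Some @: Y f'| by rewrite card_imset //; exact: Some_inj.
set Fb := [set f in Fs S | restr f == f'].
have inj : {in Fb &, injective (fun f : {ffun T -> option U} => f x)}.
  move=> f1 f2 /setIdP[h1 /eqP r1] /setIdP[h2 /eqP r2] /= e.
  apply/ffunP=> z.
  case: (boolP (z \in C)) => zC.
    have [lt ez] := index_porbit zC.
    by rewrite -ez (Fs_iter _ hS h1 xS) (Fs_iter _ hS h2 xS) e.
  case: (boolP (z \in S)) => zS.
    have zS' : z \in S' by rewrite !inE zC zS.
    have : restr f1 z = restr f2 z by rewrite r1 r2.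
    by rewrite !ffunE zS'.
  have [d1 _ _] := FsP _ _ h1; have [d1' _ _] := FsP _ _ h2.
  move: (d1 z) (d1' z); rewrite (negbTE zS).
  by case: (f1 z) => //; case: (f2 z).
have img : (fun f : {ffun T -> option U} => f x) @: Fb = Some @: Y f'.
  apply/setP=> o; apply/imsetP/imsetP.
  - case=> f /setIdP[hf /eqP rf] ->.
    have [d1 d2 d3] := FsP _ _ hf.
    case fx: (f x) => [y|]; last by move: (d1 x); rewrite xS fx.
    exists y => //; rewrite inE; apply/andP; split.
      by rewrite (Fs_orbit hS hf xS fx).
    apply/forall_inP=> z zS'; rewrite -rf ffunE zS' -fx; apply/eqP=> e.
    have ezx := d2 _ _ (S'S zS') xS e.
    by move: zS'; rewrite ezx !inE xC.
  - case=> y hy ->; exists (ext f' y).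
      by apply/setIdP; rewrite ext_Fs // restr_ext // eqxx.
    by have := ext_key hy 0.
by rewrite -img card_in_imset.
Qed.

Lemma Y_card f' : f' \in Fs S' -> #|Y f'| = ((cq k - cS p S' k) * k)%N.
Proof.
move=> hf'.
set K := [set y | #|porbit q y| == k].
set Im := [set y | [exists z in S', f' z == Some y]].
have YE : Y f' = K :\: Im.
  apply/setP=> y; rewrite !inE andbC; case: (#|porbit q y| == k); rewrite ?andbF //=; rewrite !andbT.
    apply/forall_inP/negP => [h /exists_inP[z zS /eqP e]|h z zS].
    by move: (h z zS); rewrite e eqxx.
  by apply/negP => /eqP e; apply: h; apply/exists_inP; exists z; rewrite ?e.
have cK : #|K| = (cq k * k)%N.
  have e1 : cS q [set: U] k = cq k.
    by rewrite /cS /cq; apply: eq_card => D; rewrite !inE subsetT.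
  rewrite -e1 -(@card_pts _ q [set: U] k); last by apply/forall_inP=> z; rewrite inE.
  by apply: eq_card => z; rewrite !inE.
have [h1 h2 h3] := FsP _ _ hf'.
set P := [set z in S' | #|porbit p z| == k].
have cP : #|P| = (cS p S' k * k)%N by rewrite card_pts // invs_D.
have cKI : #|K :&: Im| = #|P|.
  have -> : #|K :&: Im| = #|Some @: (K :&: Im)| by rewrite card_imset //; exact: Some_inj.
  have <- : #|f' @: P| = #|P|.
    by apply: card_in_imset => z w /setIdP[zS _] /setIdP[wS _]; apply: h2.
  apply: eq_card => o; apply/imsetP/imsetP.
    - case=> y; rewrite !inE => /andP[yK /exists_inP[z zS /eqP fz]] ->.
      exists z => //; rewrite inE zS /= -(Fs_orbit invs_D hf' zS fz); exact: yK.
    - case=> z; rewrite inE => /andP[zS zk] ->.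
      case fz: (f' z) => [y|]; last by move: (h1 z); rewrite zS fz.
      exists y => //; rewrite !inE (Fs_orbit invs_D hf' zS fz) zk /=.
      by apply/exists_inP; exists z; rewrite ?fz.
by rewrite YE cardsD cK cKI cP mulnBl.
Qed.

Lemma card_Fs_step : #|Fs S| = (#|Fs S'| * ((cq k - cS p S' k) * k))%N.
Proof.
rewrite -sum1_card (partition_big restr (mem (Fs S'))) => [|f hf]; last exact: restr_Fs.
rewrite -sum_nat_const; apply: eq_bigr => f' hf'.
rewrite -(Y_card hf') -(fiber_card hf') -sum1_card; apply: eq_bigl => f.
by rewrite inE.
Qed.

End Step.

Lemma cS0 i : cS p set0 i = 0.
Proof.
apply/eqP; rewrite cards_eq0; apply/eqP/setP=> D; rewrite !inE.
case: (boolP (D \in porbits p)) => //= /imsetP[w _ ->].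
by rewrite subset0; apply/negP => /andP[/eqP e _]; move: (porbit_id p w); rewrite e inE.
Qed.

Lemma Fs0 : #|Fs set0| = 1.
Proof.
apply/eqP/cards1P; exists [ffun=> None]; apply/setP=> f; rewrite !inE.
apply/idP/eqP => [|->].
  case/and3P=> /forallP h _ _; apply/ffunP=> z; rewrite ffunE.
  by move: (h z); rewrite inE; case: (f z).
by apply/and3P; split; apply/forallP=> z; rewrite ?ffunE ?inE.
Qed.

Lemma ac4 (a b P d c : nat) : (a * b * P * (d * c) = a * c * (b * d) * P)%N.
Proof. ring. Qed.

Lemma main_count N (S : {set T}) : invs p S -> #|T| <= N ->
  #|Fs S| = \prod_(i < N.+1) (i ^ cS p S i * cq i ^_ cS p S i).
Proof.
move=> hS0 hN.
elim: {S}_.+1 {-2}S (ltnSn #|S|) hS0 => // n IH S hSn hS.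
case: (set_0Vmem S) => [->|[x xS]].
  by rewrite Fs0 big1 // => i _; rewrite cS0.
rewrite (card_Fs_step hS xS).
set C := porbit p x.
have hk : #|C| < N.+1 by rewrite ltnS (leq_trans _ hN) ?max_card.
have k0 : 0 < #|C| by apply: porbit_pos.
rewrite (IH (S :\: C)); first last.
- exact: invs_D.
- rewrite -ltnS (leq_trans _ hSn) // ltnS; apply: proper_card; rewrite properE subsetDl /=.
  by apply/negP=> /subsetP/(_ x xS); rewrite !inE porbit_id.
rewrite (bigD1 (Ordinal hk)) // [in RHS](bigD1 (Ordinal hk)) //=.
rewrite (cS_D hS xS) eqxx addn1 expnSr ffactnSr.
have Pe : \prod_(i < N.+1 | i != Ordinal hk) (i ^ cS p S i * cq i ^_ cS p S i) =
  \prod_(i < N.+1 | i != Ordinal hk) (i ^ cS p (S :\: C) i * cq i ^_ cS p (S :\: C) i).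
  apply: eq_bigr => i ni; rewrite (cS_D hS xS).
  by rewrite -[i == #|C| :> nat]/(i == Ordinal hk) (negbTE ni) addn0.
rewrite Pe; exact: ac4.
Qed.

End Count.

Section Final.
Variables (T U : finType) (p : {perm T}) (q : {perm U}).

Definition Xeq := [set f : {ffun T -> U} | injectiveb f && [forall z, f (p z) == q (f z)]].

Lemma count_inj (u0 : U) N : #|T| <= N -> #|Xeq| =
  \prod_(i < N.+1) (i ^ #|[set C in porbits p | #|C| == i]| *
                    #|[set C in porbits q | #|C| == i]| ^_ #|[set C in porbits p | #|C| == i]|).
Proof.
move=> hN.
have e1 i : #|[set C in porbits p | #|C| == i]| = cS p [set: T] i.
  by rewrite /cS; apply: eq_card => D; rewrite !inE subsetT.
under eq_bigr => i _ do rewrite e1.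
rewrite -(main_count q (S := [set: T])) //; last by apply/forall_inP=> z; rewrite inE.
pose F (f : {ffun T -> U}) : {ffun T -> option U} := [ffun z => Some (f z)].
have Finj : injective F.
  by move=> f g e; apply/ffunP=> z; have := congr1 (fun h : {ffun T -> option U} => h z) e; rewrite !ffunE => -[].
rewrite -(card_imset _ Finj); apply: eq_card => h; apply/imsetP/idP.
  case=> f; rewrite inE => /andP[/injectiveP fi /forallP fe] ->.
  apply/FsP; split.
  - by move=> z; rewrite ffunE inE.
  - by move=> z w _ _; rewrite !ffunE => -[]; apply: fi.
  - by move=> z _; rewrite !ffunE (eqP (fe z)).
case/FsP=> h1 h2 h3.
have hz z : h z = Some (odflt u0 (h z)) by move: (h1 z); rewrite inE; case: (h z).
exists [ffun z => odflt u0 (h z)]; last by apply/ffunP=> z; rewrite !ffunE -hz.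
rewrite inE; apply/andP; split.
  apply/injectiveP=> z w; rewrite !ffunE => e; apply: h2; rewrite ?inE //.
  by rewrite hz e -hz.
apply/forallP=> z; rewrite !ffunE; apply/eqP.
by move: (h3 z (in_setT z)); rewrite hz (hz z) /= => -[].
Qed.
End Final.

Section B.
Variable n : nat.
Local Notation T := ('I_n * 'I_2)%type.
Local Notation U := 'I_(2 * n).

Definition fib (i : 'I_n) : {set T} := [set z : T | z.1 == i].
Definition mat (f : {ffun T -> U}) : {set {set U}} := [set f @: fib i | i : 'I_n].
Definition fcomp (f : {ffun T -> U}) (p : {perm T}) : {ffun T -> U} := [ffun z => f (p z)].

Lemma cardTU : #|{: T}| = #|{: U}|.
Proof. by rewrite card_prod !card_ord mulnC. Qed.

Lemma bijf (f : T -> U) : injective f -> bijective f.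
Proof. by move=> fi; apply: inj_card_bij fi _; rewrite cardTU. Qed.

Lemma two_cases (a b c : 'I_2) : a != b -> c = a \/ c = b.
Proof.
move: a b c => [[|[|a]] ha] [[|[|b]] hb] [[|[|c]] hc] //= nab;
  try (by left; apply: val_inj); try (by right; apply: val_inj);
  by move: nab; rewrite (_ : Ordinal ha = Ordinal hb) ?eqxx //; apply: val_inj.
Qed.

Lemma W_char (p : {perm T}) :
  (forall z w : T, z.1 = w.1 -> (p z).1 = (p w).1) -> p \in wreath n.
Proof.
move=> h.
pose tf i := (p (i, ord0)).1.
have pinj := @perm_inj _ p.
have tinj : injective tf.
  move=> i j e.
  have d : (p (i, ord0)).2 != (p (i, ord_max)).2.
    apply/negP=> /eqP e2.
    have : p (i, ord0) = p (i, ord_max).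
      by rewrite [LHS]surjective_pairing [RHS]surjective_pairing e2 (h _ (i, ord_max)).
    by move/pinj => [].
  case: (two_cases (p (j, ord0)).2 d) => e3.
    have : p (j, ord0) = p (i, ord0).
      by rewrite [LHS]surjective_pairing [RHS]surjective_pairing e3 -/(tf j) -/(tf i) e.
    by move/pinj => [].
  have : p (j, ord0) = p (i, ord_max).
    by rewrite [LHS]surjective_pairing [RHS]surjective_pairing e3 -/(tf j) -e /tf (h _ (i, ord_max)).
  by move/pinj => [].
pose sf i (j : 'I_2) := (p (i, j)).2.
have sinj i : injective (sf i).
  move=> j j' e.
  have : p (i, j) = p (i, j').
    by rewrite [LHS]surjective_pairing [RHS]surjective_pairing (h _ (i, j')) //; congr pair.
  by move/pinj => [].
rewrite inE; apply/existsP; exists (perm tinj); apply/existsP; exists [ffun i => perm (sinj i)].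
apply/forallP=> z; rewrite ffunE !permE /tf /sf; apply/eqP.
rewrite -(h z (z.1, ord0)) //; case: z => i j /=; by case: (p (i, j)).
Qed.

Lemma W_fib (p : {perm T}) : p \in wreath n -> exists tau : {perm 'I_n}, forall i, p @: fib i = fib (tau i).
Proof.
rewrite inE => /existsP[tau /existsP[s /forallP h]]; exists tau => i.
apply/setP=> w; rewrite inE; apply/imsetP/idP.
  by case=> z; rewrite inE => /eqP zi ->; rewrite (eqP (h z)) /= zi.
move=> /eqP wi; exists (i, ((s i)^-1)%g w.2); rewrite ?inE //.
by rewrite (eqP (h _)) /= permKV -wi; case: w wi.
Qed.

Lemma comp_fib (f : {ffun T -> U}) (p : {perm T}) i : fcomp f p @: fib i = f @: (p @: fib i).
Proof. by rewrite -imset_comp; apply: eq_imset => z; rewrite ffunE. Qed.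

Lemma W_mat (f : {ffun T -> U}) (p : {perm T}) : p \in wreath n -> mat (fcomp f p) = mat f.
Proof.
case/W_fib=> tau ht; apply/setP=> B; apply/imsetP/imsetP => -[i _ ->].
  by exists (tau i); rewrite // comp_fib ht.
by exists ((tau^-1)%g i); rewrite // comp_fib ht permKV.
Qed.

Lemma mat_W (f : {ffun T -> U}) (p : {perm T}) : injective f -> mat (fcomp f p) = mat f -> p \in wreath n.
Proof.
move=> fi e; apply: W_char => z w ezw.
have : fcomp f p @: fib z.1 \in mat f by rewrite -e imset_f.
case/imsetP=> j _ ej.
have hz u : u.1 = z.1 -> (p u).1 = j.
  move=> hu; have : fcomp f p u \in fcomp f p @: fib z.1 by rewrite imset_f // inE hu.
  by rewrite ej ffunE => /imsetP[v]; rewrite inE => /eqP vj /fi ->.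
by rewrite (hz z) // (hz w).
Qed.

Lemma act_mat (g : {perm U}) (f : {ffun T -> U}) : act_chords g (mat f) = mat [ffun z => g (f z)].
Proof.
rewrite /act_chords /mat -imset_comp; apply: eq_imset => i /=.
by rewrite -imset_comp; apply: eq_imset => z; rewrite ffunE.
Qed.


Lemma card_fib i : #|fib i| = 2.
Proof.
have -> : fib i = (fun j : 'I_2 => (i, j)) @: [set: 'I_2].
  apply/setP=> z; rewrite inE; apply/eqP/imsetP => [<-|[j _ ->]] //.
  by exists z.2; rewrite // -surjective_pairing.
by rewrite card_imset ?cardsT ?card_ord // => a b [].
Qed.

Lemma part_fib : partition [set fib i | i : 'I_n] [set: T].
Proof.
apply/and3P; split.
- apply/eqP/setP=> z; rewrite inE; apply/bigcupP; exists (fib z.1); rewrite ?inE //.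
  exact: imset_f.
- apply/trivIsetP=> A B /imsetP[i _ ->] /imsetP[j _ ->] ne.
  apply/pred0P=> z /=; rewrite !inE; apply/negP=> /andP[/eqP zi /eqP zj].
  by move: ne; rewrite -zi -zj eqxx.
- apply/negP=> /imsetP[i _ e]; have : (i, ord0) \in fib i by rewrite inE.
  by rewrite -e inE.
Qed.

Lemma mat_chord (f : {ffun T -> U}) : injective f -> mat f \in chordsets (2 * n).
Proof.
move=> fi; rewrite inE; apply/andP; split.
  have -> : [set: U] = f @: [set: T].
    apply/eqP; rewrite eq_sym eqEcard subsetT /= card_imset // !cardsT cardTU //.
  have -> : mat f = [set f @: (B : {set T}) | B in [set fib i | i : 'I_n]] by rewrite /mat -imset_comp.
  by rewrite imset_partition // part_fib.
apply/forall_inP=> B /imsetP[i _ ->]; by rewrite card_imset // card_fib.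
Qed.

Lemma chord_mat (u0 : U) M : M \in chordsets (2 * n) -> exists2 f : {ffun T -> U}, injective f & mat f = M.
Proof.
rewrite inE => /andP[hp /forall_inP h2].
have cM : #|M| = n.
  have := card_uniform_partition (fun B hB => eqP (h2 B hB)) hp.
  rewrite cardsT card_ord => e; apply/eqP.
  rewrite -(eqn_pmul2r (isT : 0 < 2)) -e; apply/eqP; exact: mulnC.
have tM := partition_trivIset hp.
pose blk (i : 'I_n) := nth set0 (enum M) i.
have sM : size (enum M) = n by rewrite -cardE cM.
have uM : uniq (enum M) := enum_uniq _.
have blkM i : blk i \in M by rewrite -mem_enum mem_nth // sM.
have sB i : size (enum (blk i)) = 2 by rewrite -cardE (eqP (h2 _ (blkM i))).
pose f := [ffun z : T => nth u0 (enum (blk z.1)) z.2].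
have fB i : f @: fib i = blk i.
  apply/setP=> b; apply/imsetP/idP.
    case=> z; rewrite inE => /eqP zi ->; rewrite ffunE zi -mem_enum mem_nth // sB.
    exact: ltn_ord.
  move=> hb; have hb' : b \in enum (blk i) by rewrite mem_enum.
  have lt : index b (enum (blk i)) < 2.
    by have := index_mem b (enum (blk i)); rewrite sB hb'.
  by exists (i, Ordinal lt); rewrite ?inE // ffunE /= nth_index.
exists f.
  move=> [i j] [i' j'] e.
  have bi : f (i, j) \in blk i by rewrite -fB imset_f // inE.
  have bi' : f (i', j') \in blk i' by rewrite -fB imset_f // inE.
  have eb : blk i = blk i'.
    apply/eqP; apply: contraTT (isT : true) => ne.
    have := trivIsetP tM _ _ (blkM i) (blkM i') ne.
    by move/pred0P/(_ (f (i, j))); rewrite /= bi e bi'.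
  have ii : i = i'.
    apply/val_inj/eqP; rewrite -(nth_uniq set0 _ _ uM) ?sM ?ltn_ord //. by apply/eqP.
  move: e; rewrite !ffunE /= -ii => /eqP.
  rewrite nth_uniq ?sB ?enum_uniq // => /eqP jj.
  by congr pair; apply: val_inj.
apply/setP=> B; apply/imsetP/idP.
  by case=> i _ ->; rewrite fB blkM.
move=> hB; have hB' : B \in enum M by rewrite mem_enum.
have lt : index B (enum M) < n.
  by have := index_mem B (enum M); rewrite sM hB'.
by exists (Ordinal lt); rewrite // fB /blk /= nth_index.
Qed.


Lemma fiber_W M (f0 : {ffun T -> U}) : injective f0 -> mat f0 = M ->
  #|[set f : {ffun T -> U} | injectiveb f && (mat f == M)]| = #|wreath n|.
Proof.
move=> f0i <-.
have [g0 f0K g0K] := bijf f0i.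
rewrite -(card_in_imset (f := fcomp f0) (D := wreath n)); last first.
  move=> p1 p2 _ _ e; apply/permP=> z; apply: f0i.
  by have := congr1 (fun h : {ffun T -> U} => h z) e; rewrite !ffunE.
apply: eq_card => f; rewrite inE; apply/andP/imsetP.
  case=> /injectiveP fi /eqP e.
  have pi : injective (fun z => g0 (f z)) by move=> a b /(can_inj g0K) /fi.
  exists (perm pi).
    by apply: (mat_W f0i); rewrite -e; congr mat; apply/ffunP=> z; rewrite !ffunE permE g0K.
  by apply/ffunP=> z; rewrite !ffunE permE g0K.
case=> p hp ->; split; last by rewrite W_mat.
by apply/injectiveP=> a b; rewrite !ffunE => /f0i /perm_inj.
Qed.

Lemma count_pi (g : {perm U}) (f : {ffun T -> U}) : injective f ->
  #|[set p in wreath n | [forall z, f (p z) == g (f z)]]| = (act_chords g (mat f) == mat f).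
Proof.
move=> fi; have [f' fK f'K] := bijf fi.
have pi : injective (fun z => f' (g (f z))) by move=> a b /(can_inj f'K) /perm_inj /fi.
set p0 := perm pi.
have key (p : {perm T}) : [forall z, f (p z) == g (f z)] = (p == p0).
  apply/forallP/eqP => [h|-> z]; last by rewrite permE f'K.
  by apply/permP=> z; rewrite permE -(eqP (h z)) fK.
have cp : [ffun z => g (f z)] = fcomp f p0 by apply/ffunP=> z; rewrite !ffunE permE f'K.
have -> : (act_chords g (mat f) == mat f) = (p0 \in wreath n).
  rewrite act_mat cp; apply/eqP/idP; [exact: mat_W | exact: W_mat].
case: (boolP (p0 \in wreath n)) => h.
  rewrite (_ : [set _ in _ | _] = [set p0]) ?cards1 //.
  apply/setP=> p; rewrite in_set1 -key; apply/setIdP/idP => [[]//|hp]; split => //.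
  by move: hp; rewrite key => /eqP ->.
rewrite (_ : [set _ in _ | _] = set0) ?cards0 //.
apply/setP=> p; rewrite in_set0; apply/setIdP => -[hp]; rewrite key => /eqP e.
by move: h; rewrite -e hp.
Qed.

Lemma partB (u0 : U) (g : {perm U}) :
  \sum_(p in wreath n) #|[set f : {ffun T -> U} | injectiveb f && [forall z, f (p z) == g (f z)]]| =
  #|wreath n| * #|[set M in chordsets (2 * n) | act_chords g M == M]|.
Proof.
under eq_bigr => p _ do rewrite -sum1dep_card.
rewrite (exchange_big_dep (fun f : {ffun T -> U} => injectiveb f)) //=; last first.
  by move=> p f _ /andP[].
under eq_bigr => f hf.
  rewrite (eq_bigl (fun p => p \in [set p in wreath n | [forall z, f (p z) == g (f z)]])); last first.
    by move=> p; rewrite !inE hf.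
  rewrite sum1_card count_pi; last exact/injectiveP.
  over.
rewrite (partition_big (mat) (mem (chordsets (2 * n)))) /=; last first.
  by move=> f /injectiveP fi; apply: mat_chord.
under eq_bigr => M hM.
  rewrite (eq_bigr (fun _ => 1 * nat_of_bool (act_chords g M == M))); last first.
    by move=> f /andP[_ /eqP ->]; rewrite mul1n.
  rewrite -big_distrl /= sum1dep_card.
  have [f0 f0i ef0] := chord_mat u0 hM.
  rewrite (fiber_W f0i ef0).
  over.
rewrite -big_distrr /=; congr (_ * _).
rewrite -sum1dep_card big_mkcondr /=; apply: eq_bigr => M _.
by case: (_ == _).
Qed.

End B.

Section PartC.
Variable m : nat.
Local Notation T := 'I_m.

Lemma act_chordsE (g : {perm T}) M : act_chords g M = ('P^*)^*%act M g.
Proof. by []. Qed.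

Lemma chordset_act (g : {perm T}) M : is_chordset M -> is_chordset (act_chords g M).
Proof.
case/andP=> hp /forallP h2; apply/andP; split.
  have -> : [set: T] = (fun x => g x) @: [set: T].
    apply/setP=> y; rewrite !inE; apply/esym/imsetP; exists ((g^-1)%g y); rewrite ?inE ?permKV //.
  by rewrite /act_chords imset_partition //; apply: perm_inj.
apply/forallP=> B; apply/implyP=> /imsetP[B0 hB0 ->].
by rewrite card_imset; [exact: (implyP (h2 B0)) | apply: perm_inj].
Qed.

Lemma burnside (G : {group {perm T}}) :
  \sum_(g in G) #|[set M in chordsets m | act_chords g M == M]| = (num_classes G * #|G|)%N.
Proof.
have acts : [acts G, on chordsets m | ('P^*)^*].
  apply/actsP=> g _ M; rewrite !inE; apply/idP/idP; last exact: chordset_act.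
  by move/(chordset_act (g^-1)%g); rewrite act_chordsE actK.
have -> : num_classes G = #|orbit ('P^*)^* G @: chordsets m|; last first.
  rewrite -(Frobenius_Cauchy acts); apply: eq_bigr => g gG.
  by apply: eq_card => M; rewrite !inE sub1set inE.
rewrite /num_classes; congr (card (mem _)).
have oE M : M \in chordsets m -> chord_class G M = orbit ('P^*)^* G M.
  move=> hM.
apply/setP=> M'; rewrite /chord_class inE; apply/andP/imsetP.
  case=> _ /existsP[g /andP[gG /eqP <-]]; by exists g.
case=> g gG ->; split.
  rewrite inE -act_chordsE; apply: chordset_act; by rewrite inE in hM.
  by apply/existsP; exists g; rewrite gG; apply/eqP.
by rewrite (eq_in_imset oE).
Qed.
End PartC.

Lemma cyc0 (V : finType) (s : {perm V}) : cyc s 0 = 0%N.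
Proof.
apply/eqP; rewrite cards_eq0; apply/eqP/setP=> D; rewrite !inE.
case: (boolP (D \in porbits s)) => //= /imsetP[w _ ->].
by rewrite cards_eq0; apply/negP=> /eqP e; move: (porbit_id s w); rewrite e inE.
Qed.

Lemma prod_conv n (u0 : 'I_(2 * n)) (p : {perm ('I_n * 'I_2)}) (q : {perm 'I_(2 * n)}) :
  (\prod_(1 <= i < (2 * n).+1 | (0 < cyc p i)%N) (i ^ cyc p i * (cyc q i) ^_ (cyc p i)))%N =
  #|Xeq p q|.
Proof.
rewrite (@count_inj _ _ p q u0 (2 * n)); last by rewrite card_prod !card_ord mulnC.
rewrite -(big_mkord xpredT (fun i => i ^ cyc p i * cyc q i ^_ cyc p i))%N.
rewrite big_ltn // cyc0 /= mul1n big_mkcond /=; apply: eq_bigr => i _.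
by case: (posnP (cyc p i)) => [->|].
Qed.

Lemma ac3 (a b c : nat) : (a * (c * b) = a * b * c)%N.
Proof. by rewrite (mulnC c) mulnA. Qed.

Unset Implicit Arguments.
Import GRing.Theory Num.Theory.
Local Open Scope ring_scope.

Theorem theorem1 (n : nat) (G : {group {perm 'I_(2 * n)}}) :
  (1 <= n)%N ->
  (forall g, g \in G -> circ_aut g) ->
  (num_classes G)%:R =
    ((#|wreath n| * #|G|)%:R)^-1 *
    (\sum_(pi in wreath n) \sum_(eta in G)
       \prod_(1 <= i < (2 * n).+1 | (0 < cyc pi i)%N)
          (i ^ cyc pi i * (cyc eta i) ^_ (cyc pi i))%N)%:R :> rat.
Proof.
move=> hn _.
have u0 : 'I_(2 * n) by exists 0%N; rewrite muln_gt0 hn.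
have hsum : (\sum_(pi in wreath n) \sum_(eta in G)
       \prod_(1 <= i < (2 * n).+1 | (0 < cyc pi i)%N)
          (i ^ cyc pi i * (cyc eta i) ^_ (cyc pi i)))%N =
   (#|wreath n| * #|G| * num_classes G)%N.
  under eq_bigr => p _ do under eq_bigr => q _ do rewrite (prod_conv u0).
  rewrite exchange_big /=.
  under eq_bigr => q _ do rewrite (partB u0).
  rewrite -big_distrr /= burnside; exact: ac3.
have W1 : (1%g : {perm ('I_n * 'I_2)}) \in wreath n.
  apply: W_char => z w e; by rewrite !perm1.
have pos : ((#|wreath n| * #|G|)%:R : rat) != 0.
  rewrite pnatr_eq0 muln_eq0 negb_or -!lt0n cardG_gt0 andbT.
  by apply/card_gt0P; exists 1%g.
rewrite hsum; move: pos; set a := (#|wreath n| * #|G|)%N => pos.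
by rewrite natrM mulKf.
Qed.
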